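(* Let $(\mathcal S,\mathcal A,P,R,\rho)$ be a finite Episodic Learning Process with terminal set $\mathcal S_\bot$, and let $\gamma:\mathcal S\to[0,1]$ be any discounting function such that $\gamma(s)<1$ for every terminal state $s\in\mathcal S_\bot$. Then: (1) $\mathcal B^\gamma$ has a unique fixed point in $\mathcal Q$, i.e. the equation $Q=\mathcal B^\gamma Q$ has exactly one solution $Q\in\mathcal Q$; (2) this fixed point equals $\lim_{n\to\infty}(\mathcal B^\gamma)^n Q$ for every $Q\in\mathcal Q$; (3) when $\gamma=\gamma_{\mathrm{epi}}$, the fixed point $Q^*$ of $\mathcal B^{\gamma_{\mathrm{epi}}}$ is an optimal Q-function: every policy $\pi^*$ with $\pi^*(a|s)>0$ only if $Q^*(s,a)=\max_{\bar a}Q^*(s,\bar a)$ satisfies $J(\pi^* )=\max_\pi J(\pi)$.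
   Context: A finite Episodic Learning Process (ELP) is a tuple $(\mathcal S,\mathcal A,P,R,\rho)$ with finite state space $\mathcal S$, finite action space $\mathcal A$, reward function $R:\mathcal S\to\mathbb R$, transition probabilities $P(s'|s,a)$, distribution $\rho$ on $\mathcal S$, and a nonempty set of terminal states $\mathcal S_\bot\subseteq\mathcal S$. A policy $\pi$ assigns to each $s$ a distribution $\pi(\cdot|s)$ on $\mathcal A$. Running $\pi$ gives a process $S_0,A_0,S_1,A_1,\dots$ with $S_0$ a fixed terminal state, $A_t\sim\pi(\cdot|S_t)$, $S_{t+1}\sim P(\cdot|S_t,A_t)$; write $\mathbb P_\pi,\mathbb E_\pi$. The termination time is $T=\inf\{t\ge1:S_t\in\mathcal S_\bot\}$. The ELP conditions are: (i) $\mathbb E_\pi[T]<\infty$ for every policy $\pi$; (ii) $P(s'|s,a)=\rho(s')$ for all $s\in\mathcal S_\bot$, $a\in\mathcal A$, $s'\in\mathcal S$; (iii) every state of $\mathcal S$ is reachable, i.e. for each $s$ there exist a policy $\pi$ and $t\ge1$ with $\mathbb P_\pi(S_t=s)>0$. The objective is $J(\pi)=\mathbb E_\pi[\sum_{t=1}^T R(S_t)]$; a policy is optimal if it maximizes $J$ over all policies. $\mathcal Q$ denotes the set of all functions $Q:\mathcal S\times\mathcal A\to\mathbb R$. For $\gamma:\mathcal S\to[0,1]$, the generalized Bellman optimality operator is $\mathcal B^\gamma Q(s,a)=\sum_{s'\in\mathcal S}P(s'|s,a)\big(R(s')+\gamma(s')\max_{a'\in\mathcal A}Q(s',a')\big)$.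 The episodic discounting function is $\gamma_{\mathrm{epi}}(s)=1$ if $s\notin\mathcal S_\bot$ and $0$ if $s\in\mathcal S_\bot$. A Q-function $Q$ is an optimal Q-function if every $Q$-greedy policy (one with $\pi(a|s)>0$ only if $Q(s,a)=\max_{\bar a}Q(s,\bar a)$) is optimal. *)

(* Defs.v *)
From HB Require Import structures.
From mathcomp Require Import all_boot all_order all_algebra.
From mathcomp Require Import all_classical all_reals all_analysis.
Set Implicit Arguments. Unset Strict Implicit. Unset Printing Implicit Defensive.
Import Order.TTheory GRing.Theory Num.Theory numFieldNormedType.Exports.
Local Open Scope ring_scope.

Section ELP.
Variables (R : realType) (S A : finType).
(* transition kernel P s a s' = P(s'|s,a); reward r; initial distribution rho;
   terminal set term; s0 = the fixed terminal state S_0 *)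
Variables (P : S -> A -> S -> R) (r : S -> R) (rho : S -> R) (term : {set S}) (s0 : S).

Definition is_distr (d : S -> R) := (forall s, 0 <= d s) /\ \sum_s d s = 1.

Definition is_policy (pi : S -> A -> R) :=
  forall s, (forall a, 0 <= pi s a) /\ \sum_a pi s a = 1.

Definition step (pi : S -> A -> R) (s s' : S) : R := \sum_a pi s a * P s a s'.

(* probability of the finite trajectory prefix S_1 = p_1, ..., S_t = p_t,
   starting from S_0 = prev *)
Fixpoint path_prob (pi : S -> A -> R) (prev : S) (p : seq S) : R :=
  match p with
  | [::] => 1
  | s :: p' => step pi prev s * path_prob pi s p'
  end.

(* P_pi(S_t = s), t >= 1 *)
Definition prob_state (pi : S -> A -> R) (t : nat) (s : S) : R :=
  \sum_(p : t.-tuple S | last s0 p == s) path_prob pi s0 p.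

(* the event {T >= t} for t >= 1: S_1, ..., S_{t-1} are non-terminal *)
Definition alive (t : nat) (p : seq S) : bool :=
  all (fun s => s \notin term) (take t.-1 p).

Definition prob_T_ge (pi : S -> A -> R) (t : nat) : R :=
  \sum_(p : t.-tuple S | alive t p) path_prob pi s0 p.

(* E_pi[T] < oo, via E[T] = sum_{t>=1} P(T >= t) (series of nonnegative terms) *)
Definition finite_expected_T (pi : S -> A -> R) : Prop :=
  cvgn (fun n => \sum_(1 <= t < n) prob_T_ge pi t).

Definition exp_reward_at (pi : S -> A -> R) (t : nat) : R :=
  \sum_(p : t.-tuple S | alive t p) path_prob pi s0 p * r (last s0 p).

(* J(pi) = E_pi[sum_{t=1}^T R(S_t)] = sum_{t>=1} E_pi[R(S_t) 1{T >= t}] *)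
Definition J (pi : S -> A -> R) : R :=
  limn (fun n => \sum_(1 <= t < n) exp_reward_at pi t).

Definition is_ELP : Prop :=
  [/\ ((forall s a, is_distr (P s a)) /\ is_distr rho),
      term != finset.set0 /\ s0 \in term,
      (forall pi, is_policy pi -> finite_expected_T pi),
      (forall s a s', s \in term -> (P s a s' = rho s')) &
      (forall s, exists pi t, [/\ is_policy pi, (1 <= t)%N & 0 < prob_state pi t s])].

(* max_{a} Q(s,a) (A is nonempty in any ELP; 0 is a dummy value otherwise) *)
Definition maxA (Q : S -> A -> R) (s : S) : R :=
  match [pick a : A] with
  | Some a0 => \big[Num.max/Q s a0]_(a : A) Q s a
  | None => 0
  end.

Definition bellman (gamma : S -> R) (Q : S -> A -> R) : S -> A -> R :=
  fun s a => \sum_(s' : S) P s a s' * (r s' + gamma s' * maxA Q s').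

Definition gamma_epi (s : S) : R := if s \in term then 0 else 1.

Definition is_greedy (Q : S -> A -> R) (pi : S -> A -> R) :=
  is_policy pi /\ (forall s a, 0 < pi s a -> Q s a = maxA Q s).

Definition is_optimal (pi : S -> A -> R) :=
  is_policy pi /\ (forall pi', is_policy pi' -> J pi' <= J pi).

Definition optimal_Q (Q : S -> A -> R) :=
  forall pi, is_greedy Q pi -> is_optimal pi.

End ELP.

(* Main.v *)
Require Import Defs.
From HB Require Import structures.
From mathcomp Require Import all_boot all_order all_algebra.
From mathcomp Require Import all_classical all_reals all_analysis.
From mathcomp Require Import ring lra.
Set Implicit Arguments. Unset Strict Implicit. Unset Printing Implicit Defensive.
Import Order.TTheory GRing.Theory Num.Theory numFieldNormedType.Exports.
Local Open Scope ring_scope.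
Local Open Scope classical_set_scope.

Notation mA := Defs.maxA.

Lemma sum_tupleS (R : realType) (S : finType) n (F : seq S -> R) :
  \sum_(p : n.+1.-tuple S) F p = \sum_(y : S) \sum_(q : n.-tuple S) F (y :: q).
Proof.
rewrite pair_big /=.
rewrite (reindex (fun yq : S * n.-tuple S => [tuple of yq.1 :: yq.2])) /=; last first.
  exists (fun p : n.+1.-tuple S => (thead p, [tuple of behead p])) => [[y q]|p] _ /=.
    by congr pair; apply: val_inj.
  by apply: val_inj => /=; case: p => -[|a s] //=.
by apply: eq_bigr => -[y q].
Qed.

Lemma sum_tuple0 (R : realType) (S : finType) (F : seq S -> R) :
  \sum_(p : 0.-tuple S) F p = F [::].
Proof. by rewrite (big_pred1 [tuple]) // => q; rewrite [q]tuple0 /= eqxx. Qed.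

Section MaxA.
Variables (R : realType) (S A : finType) (a0 : A).

Lemma maxA_ge (Q : S -> A -> R) s a : Q s a <= mA Q s.
Proof.
rewrite /Defs.maxA; case: pickP => [b _|/(_ a)//].
exact: le_bigmax.
Qed.

Lemma maxA_eq (Q : S -> A -> R) s : exists a, mA Q s = Q s a.
Proof.
rewrite /Defs.maxA; case: pickP => [b _|/(_ a0)//].
elim/big_ind: _ => [|x y [a1 ->] [a2 ->]|a _]; first by exists b.
- by rewrite /Order.max; case: ifP => _; [exists a2|exists a1].
- by exists a.
Qed.

Lemma maxA_le (Q : S -> A -> R) s m : (forall a, Q s a <= m) -> mA Q s <= m.
Proof. by move=> H; have [a ->] := maxA_eq Q s. Qed.

Lemma maxA_dist (Q1 Q2 : S -> A -> R) s :
  `|mA Q1 s - mA Q2 s| <= mA (fun s a => `|Q1 s a - Q2 s a|) s.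
Proof.
have [a1 e1] := maxA_eq Q1 s; have [a2 e2] := maxA_eq Q2 s.
have h1 := maxA_ge Q2 s a1; have h2 := maxA_ge Q1 s a2.
have k1 := maxA_ge (fun s a => `|Q1 s a - Q2 s a|) s a1.
have k2 := maxA_ge (fun s a => `|Q1 s a - Q2 s a|) s a2.
rewrite /= in k1 k2.
have n1 := ler_norm (Q1 s a1 - Q2 s a1).
have n2 : Q2 s a2 - Q1 s a2 <= `|Q1 s a2 - Q2 s a2| by rewrite distrC ler_norm.
rewrite e1 e2 in h1 h2; rewrite e1 e2 ler_norml; apply/andP; split; lra.
Qed.

End MaxA.

Section Contr.
Variables (R : realType) (S A : finType) (a0 : A).
Variables (P : S -> A -> S -> R) (r : S -> R) (gamma : S -> R).
Hypothesis Hd : forall s a, is_distr (P s a).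
Hypothesis Hg : forall s, 0 <= gamma s <= 1.

Let B := bellman P r gamma.
Definition Dist (Q1 Q2 : S -> A -> R) s := mA (fun s a => `|Q1 s a - Q2 s a|) s.
Definition Mop (D : S -> R) s := mA (fun s a => \sum_s' P s a s' * (gamma s' * D s')) s.

Lemma P_ge0 s a s' : 0 <= P s a s'. Proof. by case: (Hd s a). Qed.
Lemma P_sum1 s a : \sum_s' P s a s' = 1. Proof. by case: (Hd s a). Qed.

Lemma Dist_ge0 Q1 Q2 s : 0 <= Dist Q1 Q2 s.
Proof. exact: le_trans (normr_ge0 _) (maxA_ge (fun s a => `|Q1 s a - Q2 s a|) s a0). Qed.

Lemma Dist_le Q1 Q2 s a : `|Q1 s a - Q2 s a| <= Dist Q1 Q2 s.
Proof. exact: (maxA_ge (fun s a => `|Q1 s a - Q2 s a|)). Qed.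

Lemma Dist_bellman Q1 Q2 s : Dist (B Q1) (B Q2) s <= Mop (Dist Q1 Q2) s.
Proof.
apply: (maxA_le a0) => a /=.
apply: le_trans (maxA_ge _ s a) => /=.
rewrite /B /bellman -sumrB.
apply: le_trans (ler_norm_sum _ _ _) _.
apply: ler_sum => s' _.
rewrite -mulrBr normrM ger0_norm ?P_ge0 // ler_wpM2l ?P_ge0 //.
rewrite opprD addrACA subrr add0r -mulrBr normrM.
have [g0 g1] := andP (Hg s').
rewrite ger0_norm // ler_wpM2l //.
exact: (maxA_dist a0).
Qed.

Lemma Mop_mono D1 D2 s : (forall s, D1 s <= D2 s) -> Mop D1 s <= Mop D2 s.
Proof.
move=> H; apply: (maxA_le a0) => a /=; apply: le_trans (maxA_ge _ s a) => /=.
apply: ler_sum => s' _; rewrite ler_wpM2l ?P_ge0 // ler_wpM2l ?H //.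
by case/andP: (Hg s').
Qed.

Lemma Mop_scale D U c s : 0 <= c -> (forall s, D s <= c * U s) -> Mop D s <= c * Mop U s.
Proof.
move=> c0 H; apply: (maxA_le a0) => a /=.
apply: le_trans (ler_wpM2l c0 (maxA_ge _ s a)) => /=.
rewrite mulr_sumr; apply: ler_sum => s' _.
rewrite [c * _]mulrCA ler_wpM2l ?P_ge0 // [c * _]mulrCA ler_wpM2l ?H //.
by case/andP: (Hg s').
Qed.

Lemma Mop_le D K s : (forall s, 0 <= D s <= K) -> Mop D s <= K.
Proof.
move=> H; apply: (maxA_le a0) => a /=.
apply: le_trans (_ : \sum_s' P s a s' * K <= K).
  apply: ler_sum => s' _; rewrite ler_wpM2l ?P_ge0 //.
  by have := H s'; have := Hg s'; nra.
by rewrite -mulr_suml P_sum1 mul1r.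
Qed.

Lemma Mop_ge0 D s : (forall s, 0 <= D s) -> 0 <= Mop D s.
Proof.
move=> H; apply: le_trans (maxA_ge _ s a0) => /=.
apply: sumr_ge0 => s' _; rewrite mulr_ge0 ?P_ge0 // mulr_ge0 //.
by case/andP: (Hg s').
Qed.

Definition u n := iter n Mop (fun _ => 1).

Lemma u_01 n s : 0 <= u n s <= 1.
Proof.
elim: n s => [|n IH] s /=; first by rewrite ler01 lexx.
apply/andP; split; first by apply: Mop_ge0 => s'; case/andP: (IH s').
exact: Mop_le.
Qed.

Lemma Dist_iter n Q1 Q2 K s : 0 <= K -> (forall s, Dist Q1 Q2 s <= K) ->
  Dist (iter n B Q1) (iter n B Q2) s <= K * u n s.
Proof.
move=> K0 HK; elim: n s => [|n IH] s /=; first by rewrite mulr1.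
apply: le_trans (Dist_bellman _ _ _) _.
exact: Mop_scale.
Qed.

Lemma Dist_nonexp n Q1 Q2 K s : 0 <= K -> (forall s, Dist Q1 Q2 s <= K) ->
  Dist (iter n B Q1) (iter n B Q2) s <= K.
Proof.
move=> K0 HK; apply: le_trans (Dist_iter n s K0 HK) _.
by rewrite ler_piMr //; case/andP: (u_01 n s).
Qed.

Lemma Dist_bound Q1 Q2 : exists K, 0 <= K /\ forall s, Dist Q1 Q2 s <= K.
Proof.
exists (\sum_s Dist Q1 Q2 s); split; first by apply: sumr_ge0 => s _; apply: Dist_ge0.
move=> s; rewrite (bigD1 s) //= lerDl.
by apply: sumr_ge0 => ? _; apply: Dist_ge0.
Qed.

Lemma Dist_of_bound Q1 Q2 K : (forall s a, `|Q1 s a - Q2 s a| <= K) -> forall s, Dist Q1 Q2 s <= K.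
Proof. by move=> H s; apply: (maxA_le a0). Qed.

Section WithN.
Variables (N : nat) (c : R).
Hypothesis c0 : 0 <= c.
Hypothesis c1 : c < 1.
Hypothesis HN : forall s, u N s <= c.

Lemma Dist_geom k n Q1 Q2 K s : (k * N <= n)%N -> 0 <= K -> (forall s, Dist Q1 Q2 s <= K) ->
  Dist (iter n B Q1) (iter n B Q2) s <= c ^+ k * K.
Proof.
elim: k n Q1 Q2 K s => [|k IH] n Q1 Q2 K s hn K0 HK.
  by rewrite expr0 mul1r; apply: Dist_nonexp.
rewrite mulSn in hn.
rewrite -(subnK (leq_trans (leq_addr _ _) hn)) !iterD.
rewrite exprSr -mulrA; apply: IH => //.
- by rewrite leq_subRL ?(leq_trans (leq_addr _ _) hn) // addnC.
- exact: mulr_ge0.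
- move=> s'; apply: le_trans (Dist_iter N s' K0 HK) _.
  by rewrite mulrC ler_wpM2r.
Qed.


Lemma Dist_tri Q1 Q2 Q3 s : Dist Q1 Q3 s <= Dist Q1 Q2 s + Dist Q2 Q3 s.
Proof.
apply: (maxA_le a0) => a /=.
apply: le_trans (ler_distD (Q2 s a) _ _) _.
by apply: lerD; apply: Dist_le.
Qed.

Lemma Dist_refl Q s : Dist Q Q s = 0.
Proof.
apply/eqP; rewrite eq_le Dist_ge0 andbT.
by apply: (maxA_le a0) => a /=; rewrite subrr normr0.
Qed.

Lemma le0_geom M x : (forall k, x <= c ^+ k * M) -> x <= 0.
Proof.
move=> H.
have cv : (fun k => c ^+ k * M) @ \oo --> 0.
  rewrite -(mul0r M); apply: cvgMr_tmp; apply: cvg_expr; rewrite ger0_norm //.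
rewrite -(cvg_lim _ cv) //; apply: limr_ge; first by apply/cvg_ex; exists 0.
exact: nearW.
Qed.

Let Q0 : S -> A -> R := fun _ _ => 0.
Let v k := iter (k * N) B Q0.

Lemma fixed_exists : exists Qs, B Qs = Qs.
Proof.
have c1' : 0 < 1 - c by rewrite subr_gt0.
have [L [L0 HL]] := Dist_bound (iter N B Q0) Q0.
pose M' := L / (1 - c).
have M'0 : 0 <= M' by rewrite divr_ge0 // ltW.
have orb : forall j s, Dist (v j) Q0 s <= M'.
  elim=> [|j IH] s; first by rewrite /v mul0n /= Dist_refl.
  apply: le_trans (Dist_tri _ (v 1) _ _) _.
  have e1 : v j.+1 = iter N B (v j) by rewrite /v mulSn iterD.
  have e2 : v 1 = iter N B Q0 by rewrite /v mul1n.
  rewrite e1 e2.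
  apply: le_trans (lerD (Dist_geom (k := 1) _ _ M'0 IH) (HL s)) _ => //.
    by rewrite mul1n.
  rewrite expr1 /M' (_ : c * (L / (1 - c)) + L = L / (1 - c)) //.
  by field; rewrite gt_eqF.
have cau : forall k m s a, (k <= m)%N -> `|v m s a - v k s a| <= c ^+ k * M'.
  move=> k m s a km; apply: le_trans (Dist_le _ _ _ _) _.
  have -> : v m = iter (k * N) B (v (m - k)).
    by rewrite /v -iterD -mulnDl subnKC.
  by apply: Dist_geom => //; apply: orb.
pose Qs s a := limn (fun k => v k s a).
have cv : forall s a, cvgn (fun k => v k s a).
  move=> s a.
  pose d k := v k.+1 s a - v k s a.
  have hd : cvgn (series d).
    apply: normed_cvg.
    apply: (@series_le_cvg _ _ (geometric M' c)) => [n|n|n|].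
    - exact: normr_ge0.
    - by rewrite /geometric /= mulr_ge0 // exprn_ge0.
    - by rewrite /= /geometric /= mulrC; apply: cau.
    - by apply: is_cvg_geometric_series; rewrite ger0_norm.
  have e : forall n, v n s a = series d n + v 0 s a.
    elim=> [|n IH]; first by rewrite seriesEnat /= big_geq // add0r.
    by rewrite seriesSr addrAC -IH /d addrC subrK.
  have -> : (fun k => v k s a) = series d + cst (v 0 s a).
    by apply: funext => n; rewrite e.
  by apply: is_cvgD => //; apply: is_cvg_cst.
have bnd : forall k s a, `|Qs s a - v k s a| <= c ^+ k * M'.
  move=> k s a; rewrite ler_norml; apply/andP; split.
  - rewrite lerBrDr; apply: limr_ge; first exact: cv.
    exists k => // m /= km; have := cau _ _ s a km; rewrite ler_norml => /andP[h _].
    by rewrite -lerBrDr.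
  - rewrite lerBlDr; apply: limr_le; first exact: cv.
    exists k => // m /= km; have := cau _ _ s a km; rewrite ler_norml => /andP[_ h].
    by rewrite -lerBlDr.
have [L1 [L10 HL1]] := Dist_bound (B Q0) Q0.
exists Qs; apply: funext => s; apply: funext => a.
apply/eqP; rewrite -subr_eq0 -normr_le0.
apply: (@le0_geom (M' + L1 + M')) => k.
rewrite !mulrDr.
apply: le_trans (ler_distD (v k s a) _ _) _.
apply: lerD; last by rewrite distrC; apply: bnd.
apply: le_trans (ler_distD (B (v k) s a) _ _) _.
apply: lerD.
- apply: le_trans (Dist_le _ _ _ _) _.
  apply: (@Dist_nonexp 1 Qs (v k) (c ^+ k * M')).
    by rewrite mulr_ge0 // exprn_ge0.
  by apply: Dist_of_bound => s' a'; apply: bnd.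
- apply: le_trans (Dist_le _ _ _ _) _.
  have -> : B (v k) = iter (k * N) B (B Q0) by rewrite /v -iterSr.
  by apply: Dist_geom.
Qed.

Lemma fixed_iter Q n : B Q = Q -> iter n B Q = Q.
Proof. by move=> H; elim: n => //= n ->. Qed.

Lemma fixed_unique Q1 Q2 : B Q1 = Q1 -> B Q2 = Q2 -> Q1 = Q2.
Proof.
move=> H1 H2; have [K [K0 HK]] := Dist_bound Q1 Q2.
apply: funext => s; apply: funext => a.
apply/eqP; rewrite -subr_eq0 -normr_le0.
apply: (@le0_geom K) => k.
apply: le_trans (Dist_le _ _ _ _) _.
rewrite -(fixed_iter (k * N) H1) -(fixed_iter (k * N) H2).
exact: Dist_geom.
Qed.

Lemma fixed_cvg Qs Q s a : B Qs = Qs -> (fun n => iter n B Q s a) @ \oo --> Qs s a.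
Proof.
move=> Hs; have [K [K0 HK]] := Dist_bound Qs Q.
apply/cvgrPdist_le => eps eps0.
have cv : (fun k => c ^+ k * K) @ \oo --> 0.
  rewrite -(mul0r K); apply: cvgMr_tmp; apply: cvg_expr; rewrite ger0_norm //.
move/cvgrPdist_le: cv => /(_ eps eps0) [k0 _ Hk0].
exists (k0 * N)%N => // n /= hn.
have := Hk0 k0 (leqnn _); rewrite sub0r normrN ger0_norm ?mulr_ge0 ?exprn_ge0 // => h.
apply: le_trans h.
rewrite -(fixed_iter n Hs) in HK *.
rewrite -{1}(fixed_iter n Hs).
apply: le_trans (Dist_le _ _ _ _) _.
by apply: Dist_geom.
Qed.

End WithN.

End Contr.

Section Walks.
Variables (R : realType) (S A : finType).
Variables (P : S -> A -> S -> R) (term : {set S}).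
Hypothesis Hd : forall s a, is_distr (P s a).

Definition W (pi : S -> A -> R) t x (g : S -> R) :=
  \sum_(p : t.-tuple S | alive term t p) path_prob P pi x p * g (last x p).

Lemma step_ge0 pi x y : is_policy pi -> 0 <= step P pi x y.
Proof.
move=> Hp; apply: sumr_ge0 => a _; apply: mulr_ge0; first by case: (Hp x).
by case: (Hd x a) => h _; apply: h.
Qed.

Lemma step_sum pi x : is_policy pi -> \sum_y step P pi x y = 1.
Proof.
move=> Hp; rewrite /step exchange_big /=.
rewrite (eq_bigr (fun a => pi x a)); first by case: (Hp x).
by move=> a _; rewrite -mulr_sumr; case: (Hd x a) => _ ->; rewrite mulr1.
Qed.

Lemma path_ge0 pi x p : is_policy pi -> 0 <= path_prob P pi x p.
Proof.
move=> Hp; elim: p x => [|y p IH] x /=; first exact: ler01.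
by rewrite mulr_ge0 // step_ge0.
Qed.

Lemma W0 pi x g : W pi 0 x g = g x.
Proof.
rewrite /W big_mkcond.
rewrite (sum_tuple0 (fun p => if alive term 0 p then path_prob P pi x p * g (last x p) else 0)).
by rewrite /= mul1r.
Qed.

Lemma WS pi t x g : W pi t.+1 x g =
  \sum_y step P pi x y * (if t is 0 then g y else (y \notin term)%:R * W pi t y g).
Proof.
rewrite /W big_mkcond.
rewrite (@sum_tupleS _ _ t (fun p => if alive term t.+1 p then path_prob P pi x p * g (last x p) else 0)).
apply: eq_bigr => y _.
case: t => [|t].
  by rewrite (sum_tuple0 (fun q => if alive term 1 (y :: q) then path_prob P pi x (y :: q) * g (last x (y :: q)) else 0)) /= mulr1.
have al : forall q : seq S, alive term t.+2 (y :: q) = (y \notin term) && alive term t.+1 q.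
  by [].
case: (boolP (y \in term)) => hy /=.
  by rewrite mul0r mulr0 big1 // => q _; rewrite al hy.
rewrite mul1r mulr_sumr [RHS]big_mkcond; apply: eq_bigr => q _; rewrite al hy /=.
by case: ifP => _; rewrite ?mulrA ?mulr0.
Qed.

Lemma W1 pi x g : W pi 1 x g = \sum_y step P pi x y * g y.
Proof. by rewrite WS. Qed.

Lemma W_ge0 pi t x g : is_policy pi -> (forall y, 0 <= g y) -> 0 <= W pi t x g.
Proof.
move=> Hp Hg; apply: sumr_ge0 => p _; rewrite mulr_ge0 //; exact: path_ge0.
Qed.

Lemma WD pi t x g1 g2 : W pi t x (fun y => g1 y + g2 y) = W pi t x g1 + W pi t x g2.
Proof. by rewrite /W -big_split /=; apply: eq_bigr => p _; rewrite mulrDr. Qed.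

Lemma W_abs pi t x g K : is_policy pi -> (forall y, `|g y| <= K) ->
  `|W pi t x g| <= K * W pi t x (fun _ => 1).
Proof.
move=> Hp HK; rewrite /W mulr_sumr.
apply: le_trans (ler_norm_sum _ _ _) _; apply: ler_sum => p _.
rewrite normrM ger0_norm ?path_ge0 // mulr1 mulrC ler_wpM2r ?path_ge0 //.
Qed.

End Walks.

Lemma pos_mul (R : realType) (x y : R) : 0 <= x -> 0 <= y -> 0 < x * y -> 0 < x /\ 0 < y.
Proof.
move=> x0 y0 h; split; rewrite lt_def ?x0 ?y0 andbT; apply/eqP => e;
  by move: h; rewrite e ?mul0r ?mulr0 ltxx.
Qed.

Lemma pos_sum (R : realType) (I : finType) (Pr : pred I) (F : I -> R) :
  0 < \sum_(i | Pr i) F i -> exists i, Pr i /\ 0 < F i.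
Proof.
move=> h; case: (pselect (exists i, Pr i /\ 0 < F i)) => // H; exfalso.
suff : \sum_(i | Pr i) F i <= 0 by rewrite leNgt h.
apply: le_trans (_ : _ <= \sum_(i | Pr i) (0:R)) _; last by rewrite big1.
apply: ler_sum => i Pi.
by rewrite leNgt; apply/negP => hi; apply: H; exists i.
Qed.

Section Key.
Variables (R : realType) (S A : finType) (a0 : A).
Variables (P : S -> A -> S -> R) (rho : S -> R) (term : {set S}) (s0 : S) (gamma : S -> R).
Hypothesis Hd : forall s a, is_distr (P s a).
Hypothesis Hterm : forall s a s', s \in term -> P s a s' = rho s'.
Hypothesis Hs0 : s0 \in term.
Hypothesis Hfin : forall pi, is_policy pi -> finite_expected_T P term s0 pi.
Hypothesis Hreach : forall s, exists pi t, [/\ is_policy pi, (1 <= t)%N & 0 < prob_state P s0 pi t s].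
Hypothesis Hg : forall s, 0 <= gamma s <= 1.
Hypothesis Hgt : forall s, s \in term -> gamma s < 1.

Lemma prob_T_geE pi t : prob_T_ge P term s0 pi t = W P term pi t s0 (fun _ => 1).
Proof. by apply: eq_bigr => p _; rewrite mulr1. Qed.

Lemma tozero pi : is_policy pi -> (fun t => prob_T_ge P term s0 pi t) @ \oo --> 0.
Proof.
move=> /Hfin; rewrite /finite_expected_T => cv.
set sig := (fun n => _) in cv.
rewrite -cvg_shiftS.
have e : forall n, prob_T_ge P term s0 pi n.+1 = sig n.+2 - sig n.+1.
  by move=> n; rewrite /sig big_nat_recr //= addrAC subrr add0r.
have c1 : (fun n => sig n.+1) @ \oo --> limn sig.
  by rewrite (cvg_shiftS sig).
have c2 : (fun n => sig n.+2) @ \oo --> limn sig.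
  by rewrite (cvg_shiftS (fun n => sig n.+1)).
rewrite (_ : [sequence _]_n = (fun n => sig n.+2 - sig n.+1)); last first.
  by apply: funext => n; rewrite /= e.
have h := cvgB c2 c1; rewrite subrr in h; exact: h.
Qed.

Lemma step_term pi x y : is_policy pi -> x \in term -> step P pi x y = rho y.
Proof.
move=> Hp hx; rewrite /step (eq_bigr (fun a => pi x a * rho y)).
  by rewrite -mulr_suml; case: (Hp x) => _ ->; rewrite mul1r.
by move=> a _; rewrite Hterm.
Qed.

Lemma key : exists N, forall s, u P gamma N s < 1.
Proof.
have u01 := u_01 a0 Hd Hg.
have umono : forall n s, u P gamma n.+1 s <= u P gamma n s.
  elim=> [|n IH] s; first by case/andP: (u01 1%N s).
  by apply: (Mop_mono a0 Hd Hg).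
pose E n := [set s | u P gamma n s == 1]%SET.
have Edec : forall n, E n.+1 \subset E n.
  move=> n; apply/fintype.subsetP => s; rewrite /E !inE => /eqP h.
  rewrite eq_le; case/andP: (u01 n s) => _ ->; by rewrite -h umono.
have [n En] : exists n, E n.+1 = E n.
  case: (pselect (exists n, E n.+1 = E n)) => // H; exfalso.
  have lt : forall n, (#|E n.+1| < #|E n|)%N.
    move=> m; apply: proper_card; rewrite finset.properEneq Edec andbT.
    by apply/eqP => e; apply: H; exists m.
  have : forall m, (#|E m| + m <= #|E 0|)%N.
    elim=> [|m IH]; first by rewrite addn0.
    by apply: leq_trans IH; rewrite addnS ltn_add2r.
  by move/(_ #|E 0|.+1); rewrite addnS ltnNge leq_addl.
case: (set_0Vmem (E n)) => [E0|[s1 s1E]].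
  exists n => s; rewrite lt_neqAle; case/andP: (u01 n s) => _ ->; rewrite andbT.
  apply/eqP => h; have : s \in E n by rewrite /E inE h.
  by rewrite E0 inE.
have char : forall s, s \in E n -> exists a, forall s', 0 < P s a s' ->
    gamma s' = 1 /\ u P gamma n s' = 1.
  move=> s; rewrite -En inE /= => /eqP h.
  have [a ea] := maxA_eq a0 (fun s a => \sum_s' P s a s' * (gamma s' * u P gamma n s')) s.
  rewrite /Mop ea /= in h.
  exists a => s' hs'.
  have h0 : \sum_s'' P s a s'' * (1 - gamma s'' * u P gamma n s'') = 0.
    rewrite (eq_bigr (fun s'' => P s a s'' - P s a s'' * (gamma s'' * u P gamma n s''))); last first.
      by move=> ? _; rewrite mulrBr mulr1.
    by rewrite sumrB h (P_sum1 Hd) subrr.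
  have hg := Hg s'; have hu := u01 n s'.
  have ge : forall s'', true -> 0 <= P s a s'' * (1 - gamma s'' * u P gamma n s'').
    move=> s'' _; apply: mulr_ge0; first exact: (P_ge0 Hd).
    by have := Hg s''; have := u01 n s''; rewrite subr_ge0; nra.
  have := @psumr_eq0P _ _ _ _ ge h0 s' isT.
  move=> /eqP; rewrite mulf_eq0 (gt_eqF hs') /= subr_eq0 => /eqP e.
  split; nra.
pose C := [set s | (u P gamma n s == 1) && (gamma s == 1)]%SET.
have CE : forall s, s \in C -> s \in E n by move=> s; rewrite !inE => /andP[].
have Cnt : forall s, s \in C -> s \notin term.
  move=> s; rewrite inE => /andP[_ /eqP h]; apply/negP => /Hgt; by rewrite h ltxx.
pose good s a := [forall s', (0 < P s a s') ==> (s' \in C)].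
have goodE : forall s, s \in E n -> exists a, good s a.
  move=> s /char [a Ha]; exists a; apply/forallP => s'; apply/implyP => /Ha [h1 h2].
  by rewrite inE h1 h2 !eqxx.
pose fA s := if [pick a | good s a] is Some a then a else a0.
have fAgood : forall s, s \in E n -> good s (fA s).
  move=> s /goodE [a ga]; rewrite /fA; case: pickP => [b //|/(_ a)]; by rewrite ga.
have [z [_ zpos]] : exists z, predT z /\ 0 < P s1 (fA s1) z.
  by apply: pos_sum; rewrite (P_sum1 Hd) ltr01.
have zC : z \in C by have := fAgood _ s1E => /forallP/(_ z)/implyP; apply.
have [pi1 [t [pol1 t1 pos]]] := Hreach z.
move: pos; rewrite /prob_state => /pos_sum [p [/eqP pz pp]].
pose pi s a := if s \in C then (a == fA s)%:R else pi1 s a : R.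
have pol : is_policy pi.
  move=> s; rewrite /pi /=; case: (boolP (s \in C)) => hs; last first.
    exact: pol1.
  split; first by move=> a; rewrite ler0n.
  rewrite (bigD1 (fA s)) //= eqxx big1 ?addr0 // => a /negbTE ->; done.
have step_nC : forall x y, x \notin C -> step P pi x y = step P pi1 x y.
  by move=> x y hx; apply: eq_bigr => a _; rewrite /pi /= (negbTE hx).
have step_C : forall x y, x \in C -> step P pi x y = P x (fA x) y.
  move=> x y hx; rewrite /step (bigD1 (fA x)) //= /pi /= hx eqxx mul1r big1 ?addr0 //.
  by move=> a /negbTE ->; rewrite mul0r.
have s0C : s0 \notin C by apply/negP => /Cnt; rewrite Hs0.
have path : forall (q : seq S) x, x \notin C -> 0 < path_prob P pi1 x q -> last x q \in C ->
   exists y q', [/\ all (fun s => s \notin term) (y :: q'), last y q' \in C &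
           (0 < path_prob P pi x (y :: q')) \/ (0 < path_prob P pi s0 (y :: q'))].
  elim=> [|y q IH] x hx /=; first by move=> _ hxC; rewrite hxC in hx.
  move=> hpos hl.
  have [hst hq] := pos_mul (step_ge0 Hd x y pol1) (path_ge0 Hd y q pol1) hpos.
  case: (boolP (y \in C)) => hyC.
    exists y, [::]; split => //=; first by rewrite Cnt.
    by left; rewrite mulr1 step_nC.
  have [y2 [q2 [hall hlast hor]]] := IH y hyC hq hl.
  case: (boolP (y \in term)) => hyt.
    exists y2, q2; split => //; right; case: hor => // h.
    move: h => /=; by rewrite (step_term y2 pol hyt) (step_term y2 pol Hs0).
  case: hor => h.
  - exists y, (y2 :: q2); split => //=; first by rewrite hyt.
    by left; rewrite step_nC // mulr_gt0.
  - by exists y2, q2; split => //; right.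
have [y [q [hall hlast hpos]]] : exists y q, [/\ all (fun s => s \notin term) (y :: q),
    last y q \in C & 0 < path_prob P pi s0 (y :: q)].
  have hlp : last s0 p \in C by rewrite pz.
  have [y [q [h1 h2 h3]]] := path p s0 s0C pp hlp.
  by exists y, q; split => //; case: h3.
have WC : forall t x, x \in C -> W P term pi t x (fun _ => 1) = 1.
  elim=> [|m IH] x hx; first by rewrite W0.
  rewrite WS -[RHS](P_sum1 Hd x (fA x)); apply: eq_bigr => y' _.
  rewrite step_C //.
  case: (boolP (0 < P x (fA x) y')) => hp.
    have yC : y' \in C by have := fAgood _ (CE _ hx) => /forallP/(_ y')/implyP; apply.
    by case: m IH => [|m] IH; rewrite ?mulr1 // (Cnt _ yC) (IH _ yC) mulr1 /= mulr1.
  have -> : P x (fA x) y' = 0.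
    by apply/eqP; rewrite eq_le (P_ge0 Hd) andbT leNgt.
  by rewrite mul0r.
have Wpath : forall (q : seq S), all (fun s => s \notin term) q -> forall x m,
    path_prob P pi x q * W P term pi m (last x q) (fun _ => 1) <= W P term pi (size q + m) x (fun _ => 1).
  elim=> [|y' q' IH] /=; first by move=> _ x m; rewrite mul1r.
  move=> /andP[hy hq] x m; rewrite addSn WS (bigD1 y') //=.
  apply: ler_wpDr.
    apply: sumr_ge0 => i _; apply: mulr_ge0; first exact: step_ge0.
    case: (size q' + m)%N => [|k]; first exact: ler01.
    by apply: mulr_ge0; [apply: ler0n | apply: W_ge0].
  have Wm : W P term pi (size q' + m) y' (fun _ => 1) =
      (if (size q' + m)%N is 0 then 1 else (y' \notin term)%:R * W P term pi (size q' + m) y' (fun _ => 1)).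
    by case: (size q' + m)%N => [|k]; rewrite ?W0 // hy mul1r.
  rewrite -Wm -mulrA ler_wpM2l //; first exact: step_ge0.
  exact: IH.
pose c0 := path_prob P pi s0 (y :: q).
have lb : forall m, c0 <= prob_T_ge P term s0 pi (size (y :: q) + m).
  move=> m; rewrite prob_T_geE; apply: le_trans (Wpath _ hall s0 m).
  by rewrite /= (WC _ _ hlast) mulr1.
move/cvgrPdist_lt: (tozero pol) => /(_ c0 hpos) [M _ HM].
have := HM (size (y :: q) + M)%N (leq_addl _ _).
rewrite sub0r normrN ger0_norm; last by rewrite prob_T_geE W_ge0.
by rewrite ltNge lb.
Qed.

End Key.

Lemma cvg_le_lim (R : realType) (f g : nat -> R) l1 l2 :
  f @ \oo --> l1 -> g @ \oo --> l2 -> (forall n, f n <= g n) -> l1 <= l2.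
Proof.
move=> hf hg hfg; rewrite -(cvg_lim _ hf) // -(cvg_lim _ hg) //.
apply: ler_lim; [by apply/cvg_ex; exists l1|by apply/cvg_ex; exists l2|exact: nearW].
Qed.

Lemma cvg_dom0 (R : realType) (f g : nat -> R) K :
  g @ \oo --> 0 -> (forall n, `|f n| <= K * g n) -> f @ \oo --> 0.
Proof.
move=> hg hfg.
have h1 : (fun n => K * g n) @ \oo --> 0 by rewrite -(mulr0 K); apply: cvgMl_tmp.
have h2 : (fun n => - (K * g n)) @ \oo --> 0 by rewrite -oppr0; apply: cvgN.
apply: (squeeze_cvgr _ h2 h1); apply: nearW => n.
by have := hfg n; rewrite ler_norml.
Qed.

Section Opt.
Variables (R : realType) (S A : finType).
Variables (P : S -> A -> S -> R) (r : S -> R) (rho : S -> R) (term : {set S}) (s0 : S) (gamma : S -> R).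
Hypothesis Hd : forall s a, is_distr (P s a).
Hypothesis Hterm : forall s a s', s \in term -> P s a s' = rho s'.
Hypothesis Hs0 : s0 \in term.
Hypothesis Hfin : forall pi, is_policy pi -> finite_expected_T P term s0 pi.
Hypothesis Hepi : forall s, gamma s = gamma_epi R term s.
Variable Qs : S -> A -> R.
Hypothesis Hfix : bellman P r gamma Qs = Qs.

Let V s := mA Qs s.
Let h s := r s + gamma s * V s.
Let gV s := gamma s * V s.

Lemma QsE s a : Qs s a = \sum_s' P s a s' * h s'.
Proof. by rewrite -{1}Hfix. Qed.

Lemma gamma_nt y : gamma y = (y \notin term)%:R.
Proof. by rewrite Hepi /gamma_epi; case: (y \in term). Qed.

Lemma gamma_ge0 y : 0 <= gamma y.
Proof. by rewrite gamma_nt ler0n. Qed.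

Definition Z pi x := \sum_y step P pi x y * h y.

Lemma ZE pi x : Z pi x = \sum_a pi x a * Qs x a.
Proof.
rewrite /Z /step; under eq_bigr do rewrite mulr_suml.
rewrite exchange_big; apply: eq_bigr => a _ /=; rewrite QsE mulr_sumr.
by apply: eq_bigr => y _; rewrite mulrA.
Qed.

Lemma Z_le pi x : is_policy pi -> Z pi x <= V x.
Proof.
move=> Hp; rewrite ZE; case: (Hp x) => p0 p1.
apply: le_trans (_ : _ <= \sum_a pi x a * V x) _.
  by apply: ler_sum => a _; rewrite ler_wpM2l // /V maxA_ge.
by rewrite -mulr_suml p1 mul1r.
Qed.

Lemma Z_greedy pi x : is_greedy Qs pi -> Z pi x = V x.
Proof.
move=> [Hp Hgr]; rewrite ZE; case: (Hp x) => p0 p1.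
rewrite -[RHS]mul1r -p1 mulr_suml; apply: eq_bigr => a _.
case: (boolP (0 < pi x a)) => hp; first by rewrite Hgr.
have -> : pi x a = 0 by apply/eqP; rewrite eq_le p0 andbT leNgt.
by rewrite !mul0r.
Qed.

Definition Phi pi n x := \sum_(0 <= t < n.+1) W P term pi t.+1 x r + W P term pi n.+1 x gV.

Lemma Phi0 pi x : Phi pi 0 x = Z pi x.
Proof.
rewrite /Phi big_nat1 !W1 -big_split /=; apply: eq_bigr => y _.
by rewrite -mulrDr.
Qed.

Lemma PhiS pi n x : Phi pi n.+1 x =
  W P term pi 1 x r + \sum_y step P pi x y * (gamma y * Phi pi n y).
Proof.
rewrite /Phi big_nat_recl // -addrA; congr (_ + _).
rewrite (eq_bigr (fun t => \sum_y step P pi x y * ((y \notin term)%:R * W P term pi t.+1 y r))); last first.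
  by move=> t _; rewrite WS.
rewrite exchange_big /= WS -big_split /=; apply: eq_bigr => y _.
rewrite gamma_nt mulrDr mulrDr mulr_sumr mulr_sumr; congr (_ + _).
by rewrite -!mulr_sumr.
Qed.

Lemma Phi_le pi n x : is_policy pi -> Phi pi n x <= Z pi x.
Proof.
move=> Hp; elim: n x => [|n IH] x; first by rewrite Phi0.
rewrite PhiS -Phi0 [Phi pi 0 x]/Phi big_nat1 [W P term pi 1 x gV]W1 lerD2l.
apply: ler_sum => y _; rewrite ler_wpM2l ?step_ge0 // ler_wpM2l ?gamma_ge0 //.
exact: le_trans (IH y) (Z_le y Hp).
Qed.

Lemma Phi_eq pi n x : is_greedy Qs pi -> Phi pi n x = V x.
Proof.
move=> Hgr; elim: n x => [|n IH] x; first by rewrite Phi0 Z_greedy.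
rewrite PhiS (eq_bigr (fun y => step P pi x y * gV y)); last by move=> y _; rewrite IH.
by rewrite -(Z_greedy x Hgr) -Phi0 /Phi big_nat1 [W P term pi 1 x gV]W1.
Qed.

Definition sgm pi n := \sum_(1 <= t < n) exp_reward_at P r term s0 pi t.

Lemma sigE pi n : sgm pi n.+2 = Phi pi n s0 - W P term pi n.+1 s0 gV.
Proof. by rewrite /Phi addrK /sgm big_add1. Qed.

Lemma W_gV_0 pi : is_policy pi -> (fun n => W P term pi n.+1 s0 gV) @ \oo --> 0.
Proof.
move=> Hp.
pose K := \sum_s `|gV s|.
have HK : forall y, `|gV y| <= K.
  move=> y; rewrite /K (bigD1 y) //= lerDl; exact: sumr_ge0.
apply: (@cvg_dom0 _ _ (fun n => prob_T_ge P term s0 pi n.+1) K).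
  by have := tozero Hfin Hp; rewrite -cvg_shiftS.
by move=> n; rewrite prob_T_geE; apply: W_abs.
Qed.

Lemma J_greedy pi : is_greedy Qs pi -> J P r term s0 pi = V s0.
Proof.
move=> Hgr; have Hp := Hgr.1.
have h1 : (fun n => sgm pi n.+2) @ \oo --> V s0.
  rewrite (_ : (fun n => _) = (fun n => V s0 - W P term pi n.+1 s0 gV)); last first.
    by apply: funext => n; rewrite sigE Phi_eq.
  rewrite -[X in _ --> X]subr0; apply: cvgB; first exact: cvg_cst.
  exact: W_gV_0.
have h2 : sgm pi @ \oo --> V s0 by rewrite -cvg_shiftS -cvg_shiftS.
exact: cvg_lim h2.
Qed.

Lemma J_le pi : is_policy pi -> J P r term s0 pi <= V s0.
Proof.
move=> Hp.
pose K := \sum_s `|r s|.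
have HK : forall y, `|r y| <= K.
  move=> y; rewrite /K (bigD1 y) //= lerDl; exact: sumr_ge0.
have cP0 : cvgn (series (fun t => prob_T_ge P term s0 pi t.+1)).
  have := Hfin Hp; rewrite /finite_expected_T => cv.
  have -> : series (fun t => prob_T_ge P term s0 pi t.+1) =
      (fun n => \sum_(1 <= t < n.+1) prob_T_ge P term s0 pi t).
    by apply: funext => n; rewrite big_add1 /= seriesEnat.
  move: cv => /cvg_ex [l hl]; apply/cvg_ex; exists l.
  by rewrite (cvg_shiftS (fun n => \sum_(1 <= t < n) prob_T_ge P term s0 pi t)).
have cP := is_cvg_seriesZ (k := K) cP0.
have cu : cvgn (series (fun t => exp_reward_at P r term s0 pi t.+1)).
  apply: normed_cvg.
  apply: (series_le_cvg _ _ _ cP) => [n|n|n] /=.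
  - exact: normr_ge0.
  - change (0 <= K * prob_T_ge P term s0 pi n.+1).
    by rewrite mulr_ge0 ?prob_T_geE ?W_ge0 // (le_trans (normr_ge0 _) (HK s0)).
  - change (`|exp_reward_at P r term s0 pi n.+1| <= K * prob_T_ge P term s0 pi n.+1).
    by rewrite prob_T_geE; apply: W_abs.
have [l hl] : exists l : R, sgm pi @ \oo --> l.
  move: cu => /cvg_ex [l hl]; exists l.
  rewrite -cvg_shiftS.
  have -> : [sequence sgm pi n.+1]_n = series (fun t => exp_reward_at P r term s0 pi t.+1).
    by apply: funext => n; rewrite /sgm /= big_add1 /= seriesEnat.
  exact: hl.
have hl2 : (fun n => sgm pi n.+2) @ \oo --> l.
  by move: hl; rewrite -cvg_shiftS -cvg_shiftS.
rewrite /J (cvg_lim _ hl) //.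
apply: (cvg_le_lim hl2 (_ : (fun n => V s0 - W P term pi n.+1 s0 gV) @ \oo --> V s0)).
  rewrite -[X in _ --> X]subr0; apply: cvgB; first exact: cvg_cst.
  exact: W_gV_0.
move=> n; rewrite sigE lerD2r.
apply: le_trans (Phi_le _ _ Hp) (Z_le _ Hp).
Qed.

Lemma optimal : optimal_Q P r term s0 Qs.
Proof.
move=> pi Hgr; split; first exact: Hgr.1.
by move=> pi' Hp'; rewrite (J_greedy Hgr); apply: J_le.
Qed.

End Opt.

Lemma fin_max_lt1 (R : realType) (T : finType) (f : T -> R) :
  (forall s, f s < 1) -> exists c, [/\ 0 <= c, c < 1 & forall s, f s <= c].
Proof.
move=> H; exists (\big[Num.max/0]_s f s); split.
- exact: bigmax_ge_id.
- by apply/bigmax_ltP; split => // i _; exact: H.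
- by move=> s; apply: le_bigmax.
Qed.

Theorem theorem1 (R : realType) (S A : finType)
  (P : S -> A -> S -> R) (r : S -> R) (rho : S -> R) (term : {set S}) (s0 : S)
  (gamma : S -> R) :
  is_ELP P rho term s0 ->
  (forall s, 0 <= gamma s <= 1) ->
  (forall s, s \in term -> gamma s < 1) ->
  exists Qstar : S -> A -> R,
    [/\ bellman P r gamma Qstar = Qstar,
        (forall Q : S -> A -> R, bellman P r gamma Q = Q -> Q = Qstar),
        (forall (Q : S -> A -> R) (s : S) (a : A),
            (fun n => iter n (bellman P r gamma) Q s a) @ \oo --> Qstar s a) &
        ((forall s, gamma s = gamma_epi R term s) ->
           optimal_Q P r term s0 Qstar)].
Proof.
move=> [[Hd Hrho] [Hne Hs0] Hfin Hterm Hreach] Hg Hgt.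
have [a0 _] : exists a : A, True.
  have [pi [t [pol _ _]]] := Hreach s0.
  case: (pol s0) => _ hs.
  have [a [_ _]] : exists a, predT a /\ 0 < pi s0 a by apply: pos_sum; rewrite hs ltr01.
  by exists a.
have [N HN] := key a0 Hd Hterm Hs0 Hfin Hreach Hg Hgt.
have [c [c0 c1 Hc]] := fin_max_lt1 HN.
have [Qs HQs] := fixed_exists a0 r Hd Hg c0 c1 Hc.
exists Qs; split => //.
- by move=> Q HQ; exact: (fixed_unique a0 Hd Hg c0 c1 Hc HQ HQs).
- by move=> Q s a; exact: (fixed_cvg a0 Hd Hg c0 c1 Hc Q HQs).
- by move=> Hepi; apply: (optimal Hd Hfin Hepi HQs).
Qed.
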